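(* Let $N\ge1$, $R>0$, $m>1$, $p>1$, $\alpha,\beta\in\mathbb R$. Let $a:[0,\infty)\to(0,\infty)$ be continuous with $c_1\le a(t)\le c_2$ for all $t\ge 0$, for some constants $0<c_1\le c_2$, and let $g:[0,\infty)\to[0,\infty)$ be continuous. If $$\gamma>0,\qquad N+\beta>0,\qquad \beta-\alpha+m\le 0,$$ then the problem $$-\Big(\frac{r^{N+\alpha-1}|v'(r)|^{m-2}v'(r)}{(a(r)+g(v(r)))^\gamma}\Big)'=r^{N+\beta-1}v^p(r),\ 0<r<R,\qquad v'(0)=0,\ v(R)=0,$$ has no positive solutions.
   Context: A positive solution is a function $v$, positive on $[0,R)$, with $v\in C^1[0,R)\cap C[0,R]$, such that $r\mapsto r^{N+\alpha-1}|v'(r)|^{m-2}v'(r)\,[a(r)+g(v(r))]^{-\gamma}$ belongs to $C^1(0,R)$ and $v$ satisfies the displayed equation and boundary conditions. *)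

(* Defs.v *)
From Stdlib Require Import Reals.
From Coquelicot Require Import Coquelicot.
Open Scope R_scope.

Definition phi_m (m s : R) : R := Rpower (Rabs s) (m - 2) * s.

Definition cont_within (D : R -> Prop) (f : R -> R) (x : R) : Prop :=
  filterlim f (within D (locally x)) (locally (f x)).

Definition deriv_within (D : R -> Prop) (f : R -> R) (x l : R) : Prop :=
  filterlim (fun y => (f y - f x) / (y - x))
            (within (fun y => D y /\ y <> x) (locally x)) (locally l).

Definition flux (N : nat) (alpha m gamma : R) (a g v dv : R -> R) (r : R) : R :=
  Rpower r (INR N + alpha - 1) * phi_m m (dv r)
  / Rpower (a r + g (v r)) gamma.

Definition positive_solution (N : nat) (alpha beta m p gamma Rr : R)
    (a g v : R -> R) : Prop :=
  exists dv : R -> R,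
    (forall r, 0 <= r < Rr -> 0 < v r) /\
    (forall r, 0 <= r <= Rr -> cont_within (fun y => 0 <= y <= Rr) v r) /\
    (forall r, 0 <= r < Rr -> deriv_within (fun y => 0 <= y < Rr) v r (dv r)) /\
    (forall r, 0 <= r < Rr -> cont_within (fun y => 0 <= y < Rr) dv r) /\
    (forall r, 0 < r < Rr ->
        ex_derive (flux N alpha m gamma a g v dv) r /\
        continuous (Derive (flux N alpha m gamma a g v dv)) r) /\
    (forall r, 0 < r < Rr ->
        - Derive (flux N alpha m gamma a g v dv) r
        = Rpower r (INR N + beta - 1) * Rpower (v r) p) /\
    dv 0 = 0 /\ v Rr = 0.

(* Main.v *)
Require Import Defs.
From Stdlib Require Import Reals Lra.
From Coquelicot Require Import Coquelicot.
Open Scope R_scope.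

Lemma rp_pos x y : 0 < Rpower x y.
Proof. unfold Rpower; apply exp_pos. Qed.

Lemma rp_one q : Rpower 1 q = 1.
Proof. unfold Rpower; rewrite ln_1, Rmult_0_r; apply exp_0. Qed.

Lemma rp_le1 x q : 0 < x <= 1 -> 0 <= q -> Rpower x q <= 1.
Proof. intros Hx Hq. rewrite <- (rp_one q). apply Rle_Rpower_l; lra. Qed.


Lemma rp_ge1 x q : 0 < x <= 1 -> q <= 0 -> 1 <= Rpower x q.
Proof.
  intros Hx Hq. unfold Rpower. rewrite <- exp_0.
  assert (ln x <= 0) by (rewrite <- ln_1; apply ln_le; lra).
  assert (0 <= q * ln x) by nra.
  destruct (Rle_lt_or_eq_dec _ _ H0) as [h|h].
  - left; apply exp_increasing; exact h.
  - rewrite h; lra.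
Qed.

Lemma small_pow q t : 0 < q -> 0 < t -> exists e, 0 < e /\ forall x, 0 < x < e -> Rpower x q < t.
Proof.
  intros Hq Ht. exists (Rpower t (/q)). split. apply rp_pos.
  intros x Hx. apply Rlt_le_trans with (Rpower (Rpower t (/q)) q).
  apply Rlt_Rpower_l; lra.
  rewrite Rpower_mult, Rinv_l by lra. rewrite Rpower_1 by lra. lra.
Qed.

Lemma phi_le1 m s : 1 < m -> Rabs s <= 1 -> phi_m m s <= 1.
Proof.
  intros Hm Hs. unfold phi_m. destruct (Rle_or_lt s 0).
  - assert (0 < Rpower (Rabs s) (m-2)) by apply rp_pos. nra.
  - rewrite Rabs_right in * by lra.
    rewrite <- (Rpower_1 s) at 2 by lra. rewrite <- Rpower_plus.
    apply rp_le1; lra.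
Qed.

Lemma phi_neg m s K : 1 < m -> 0 < K -> phi_m m s <= - K ->
  Rabs s < Rpower K (/(m-1)) -> False.
Proof.
  intros Hm HK Hp Hs. unfold phi_m in Hp. destruct (Rle_or_lt 0 s).
  - assert (0 < Rpower (Rabs s) (m-2)) by apply rp_pos. nra.
  - rewrite Rabs_left in * by lra.
    assert (E : Rpower (- s) (m - 2) * s = - Rpower (-s) (m-1)).
    { replace (m-1) with ((m-2)+1) by ring. rewrite Rpower_plus, Rpower_1 by lra. ring. }
    rewrite E in Hp.
    assert (Rpower (-s) (m-1) < Rpower (Rpower K (/(m-1))) (m-1)).
    { apply Rlt_Rpower_l; lra. }
    rewrite Rpower_mult, Rinv_l, Rpower_1 in H0 by lra. lra.
Qed.

Lemma cont_eps D f x : cont_within D f x -> forall eps, 0 < eps ->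
  exists d, 0 < d /\ forall y, D y -> Rabs (y - x) < d -> Rabs (f y - f x) < eps.
Proof.
  intros H eps He.
  assert (Hb := H (ball (f x) eps) (locally_ball (f x) (mkposreal eps He))).
  destruct Hb as [d Hd]. exists d. split. apply cond_pos.
  intros y Dy Hy. apply (Hd y). exact Hy. exact Dy.
Qed.

Theorem theorem1p3 (N : nat) (Rr m p alpha beta gamma c1 c2 : R)
    (a g : R -> R) :
  (1 <= N)%nat -> 0 < Rr -> 1 < m -> 1 < p ->
  0 < c1 -> c1 <= c2 ->
  (forall t, 0 <= t -> 0 < a t) ->
  (forall t, 0 <= t -> cont_within (fun y => 0 <= y) a t) ->
  (forall t, 0 <= t -> c1 <= a t <= c2) ->
  (forall s, 0 <= s -> 0 <= g s) ->
  (forall s, 0 <= s -> cont_within (fun y => 0 <= y) g s) ->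
  0 < gamma -> 0 < INR N + beta -> beta - alpha + m <= 0 ->
  forall v : R -> R, ~ positive_solution N alpha beta m p gamma Rr a g v.
Proof.
  intros HN HR Hm Hp Hc1 Hc12 Ha0 Hac Hab Hg0 Hgc Hga Hnb Hab2 v.
  intros [dv [Hpos [Hvc [Hd [Hdc [HF [Heq [Hd0 HvR]]]]]]]].
  set (F := flux N alpha m gamma a g v dv) in *.
  set (v0 := v 0).
  assert (Hv0 : 0 < v0) by (apply Hpos; lra).
  set (c := INR N + beta) in *.
  set (q := INR N + alpha - 1).
  assert (Hq : 0 < q) by (unfold q, c in *; lra).
  set (L := Rpower (v0/2) p).
  assert (HL : 0 < L) by apply rp_pos.
  set (C1 := Rpower c1 gamma).
  assert (HC1 : 0 < C1) by apply rp_pos.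
  set (K := L / c * C1).
  assert (HK : 0 < K) by (unfold K; apply Rmult_lt_0_compat; [apply Rdiv_lt_0_compat|]; lra).
  set (eta := Rmin (Rpower K (/(m-1))) 1).
  assert (Heta : 0 < eta) by (unfold eta; apply Rmin_pos; [apply rp_pos|lra]).
  destruct (cont_eps _ _ _ (Hvc 0 ltac:(lra)) (v0/2) ltac:(lra)) as [d1 [Hd1 Hv1]].
  destruct (cont_eps _ _ _ (Hdc 0 ltac:(lra)) eta Heta) as [d2 [Hd2 Hv2]].
  rewrite Hd0 in Hv2.
  assert (Hvlow : forall y, 0 <= y < Rr -> y < d1 -> v0/2 < v y).
  { intros y Hy Hy1. assert (h := Hv1 y ltac:(lra) ltac:(rewrite Rminus_0_r, Rabs_right; lra)).
    fold v0 in h. apply Rabs_def2 in h. lra. }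
  assert (Hdlow : forall y, 0 <= y < Rr -> y < d2 -> Rabs (dv y) < eta).
  { intros y Hy Hy1. assert (h := Hv2 y ltac:(lra) ltac:(rewrite Rminus_0_r, Rabs_right; lra)).
    rewrite Rminus_0_r in h. exact h. }
  assert (HD : forall y, 0 < y < Rr -> C1 <= Rpower (a y + g (v y)) gamma).
  { intros y Hy. assert (h1 := Hab y ltac:(lra)). assert (h2 := Hpos y ltac:(lra)).
    assert (h3 := Hg0 (v y) ltac:(lra)). apply Rle_Rpower_l; lra. }
  set (r := Rmin (Rmin (Rr/2) (d1/2)) (Rmin (d2/2) (1/2))).
  assert (Hr : 0 < r /\ r < Rr /\ r < d1 /\ r < d2 /\ r < 1).
  { unfold r. pose proof (Rmin_l (Rr/2) (d1/2)). pose proof (Rmin_r (Rr/2) (d1/2)).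
    pose proof (Rmin_l (d2/2) (1/2)). pose proof (Rmin_r (d2/2) (1/2)).
    pose proof (Rmin_l (Rmin (Rr/2) (d1/2)) (Rmin (d2/2) (1/2))). pose proof (Rmin_r (Rmin (Rr/2) (d1/2)) (Rmin (d2/2) (1/2))).
    assert (0 < Rmin (Rmin (Rr/2) (d1/2)) (Rmin (d2/2) (1/2))) by (repeat apply Rmin_pos; lra).
    repeat split; lra. }
  destruct Hr as [Hr0 [HrR [Hr1 [Hr2 Hr3]]]].
  set (G := fun s => F s + L / c * Rpower s c).
  set (dG := fun s => Derive F s + L / c * (c * Rpower s (c - 1))).
  assert (HdG : forall x, 0 < x < Rr -> is_derive G x (dG x)).
  { intros x Hx. unfold G, dG.
    refine (is_derive_plus F (fun s => L/c*Rpower s c) x (Derive F x) (L/c*(c*Rpower x (c-1))) _ _).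
    - apply Derive_correct. apply HF; lra.
    - refine (is_derive_scal (fun s => Rpower s c) x (L/c) _ _).
      apply is_derive_Reals. apply derivable_pt_lim_power. lra. }
  assert (Hmono : forall e, 0 < e < r -> G r <= G e).
  { intros e He.
    destruct (MVT_gen G e r dG) as [x [Hx Hmvt]].
    - intros x Hx. rewrite Rmin_left in Hx by lra. rewrite Rmax_right in Hx by lra.
      apply HdG; lra.
    - intros x Hx. rewrite Rmin_left in Hx by lra. rewrite Rmax_right in Hx by lra.
      apply derivable_continuous_pt. exists (dG x). apply is_derive_Reals. apply HdG; lra.
    - rewrite Rmin_left in Hx by lra. rewrite Rmax_right in Hx by lra.
      assert (dG x <= 0).
      { unfold dG. assert (E := Heq x ltac:(lra)). 
        assert (Derive F x = - (Rpower x (c - 1) * Rpower (v x) p)) by lra.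
        rewrite H.
        assert (L <= Rpower (v x) p).
        { apply Rle_Rpower_l. lra. split. lra. left. apply Hvlow; lra. }
        assert (0 < Rpower x (c-1)) by apply rp_pos.
        replace (L / c * (c * Rpower x (c - 1))) with (L * Rpower x (c-1)) by (field; lra).
        nra. }
      nra. }
  assert (HGr : G r <= 0).
  { apply Rnot_lt_le. intros Ht. set (t := G r) in *.
    destruct (small_pow q (t/2 * C1) Hq ltac:(nra)) as [e1 [He1 Hs1]].
    destruct (small_pow c (t/2 / (L/c)) Hnb ltac:(apply Rdiv_lt_0_compat; [lra|apply Rdiv_lt_0_compat; lra])) as [e2 [He2 Hs2]].
    set (e := Rmin (r/2) (Rmin (e1/2) (e2/2))).
    assert (He : 0 < e /\ e < r /\ e < e1 /\ e < e2).
    { unfold e. pose proof (Rmin_l (e1/2) (e2/2)). pose proof (Rmin_r (e1/2) (e2/2)).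
      pose proof (Rmin_l (r/2) (Rmin (e1/2) (e2/2))). pose proof (Rmin_r (r/2) (Rmin (e1/2) (e2/2))).
      assert (0 < Rmin (r/2) (Rmin (e1/2) (e2/2))) by (repeat apply Rmin_pos; lra).
      repeat split; lra. }
    destruct He as [He0 [Her [Hee1 Hee2]]].
    assert (h1 := Hmono e ltac:(lra)).
    assert (HFe : F e < t/2).
    { unfold F, flux. fold q.
      assert (hp := phi_le1 m (dv e) Hm ltac:(apply Rle_trans with eta; [left; apply Hdlow; lra | apply Rmin_r])).
      assert (hD := HD e ltac:(lra)).
      assert (hq := Hs1 e ltac:(lra)).
      assert (0 < Rpower e q) by apply rp_pos.
      set (D := Rpower (a e + g (v e)) gamma) in *.
      apply Rle_lt_trans with (Rpower e q / C1).
      - unfold Rdiv. apply Rle_trans with (Rpower e q * / D).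
        + apply Rmult_le_compat_r. left; apply Rinv_0_lt_compat; lra. nra.
        + apply Rmult_le_compat_l. lra. apply Rinv_le_contravar; lra.
      - apply Rmult_lt_reg_r with C1. lra. unfold Rdiv. rewrite Rmult_assoc, Rinv_l by lra. lra. }
    assert (HHe : L / c * Rpower e c < t/2).
    { assert (hq := Hs2 e ltac:(lra)).
      assert (0 < L/c) by (apply Rdiv_lt_0_compat; lra).
      apply Rmult_lt_compat_l with (r := L/c) in hq; [|lra].
      replace (L / c * (t / 2 / (L / c))) with (t/2) in hq by (field; lra). lra. }
    unfold G in h1. fold t in h1. unfold G in t. lra. }
  unfold G, F, flux in HGr. fold q in HGr.
  assert (hD := HD r ltac:(lra)).
  set (D := Rpower (a r + g (v r)) gamma) in *.
  assert (Hc : Rpower r c = Rpower r q * Rpower r (beta - alpha + 1)).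
  { rewrite <- Rpower_plus. f_equal. unfold q, c. ring. }
  rewrite Hc in HGr.
  assert (hq : 0 < Rpower r q) by apply rp_pos.
  assert (he : 1 <= Rpower r (beta - alpha + 1)) by (apply rp_ge1; lra).
  set (ph := phi_m m (dv r)) in *.
  set (E := Rpower r (beta - alpha + 1)) in *.
  set (P := Rpower r q) in *.
  assert (Hph : ph <= - K).
  { assert (h : P * ph / D <= - (L / c * (P * E))) by lra.
    assert (h2 : P * ph <= - (L/c * (P*E)) * D).
    { apply Rmult_le_reg_r with (/ D). apply Rinv_0_lt_compat; lra.
      replace (- (L / c * (P * E)) * D * / D) with (- (L / c * (P * E))) by (field; lra). exact h. }
    assert (h3 : ph <= - (L/c * E * D)).
    { apply Rmult_le_reg_l with P. lra. nra. }
    assert (0 < L/c) by (apply Rdiv_lt_0_compat; lra).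
    unfold K. assert (E * D >= C1) by nra. assert (L/c * (E*D) >= L/c * C1) by nra. assert (L/c*E*D = L/c*(E*D)) by ring. lra. }
  apply (phi_neg m (dv r) K Hm HK Hph).
  apply Rlt_le_trans with eta. apply Hdlow; lra. apply Rmin_l.
Qed.
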